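(* Let $G$ be a connected graph with a pair of vertices of order $h$ and a marking $S$. Let $v,v'$ be two vertices of $G$ joined by exactly $e\geq1$ edges, with weights $s$ and $s'$ where $s>s'$, and normalize the marking (by adding a constant vector) so that $s'=0$; assume $s\ge 2$. Let $G'$ be obtained from $G$ by thickening the edges between $v$ and $v'$. Then the group $\Phi(G')$ contains $(\mathbb{Z}/es\mathbb{Z})^{s-2}$ as a direct summand.
   Context: Graphs are finite, connected, may have multiple edges, no loops. With $c_{ij}$ ($i\neq j$) the number of edges joining $v_i,v_j$, $c_{ii}=-\sum_{j\ne i}c_{ij}$ and $M(G)=(c_{ij})$, one has $\mathbb{Z}^n/\mathrm{Im}(M(G))\cong\mathbb{Z}\times\Phi(G)$ with $\Phi(G)$ the finite torsion subgroup ($\mathrm{Im}$ = $\mathbb{Z}$-span of columns). A pair $\{v_i,v_j\}$ has order $h>0$ if there is $S=(s_1,\dots,s_n)^t\in\mathbb{Z}^n$ with $M(G)S=h(e_i-e_j)$ and $\gcd(s_1-s_n,\dots,s_{n-1}-s_n)=1$; $S$ is a marking and $s_k$ the weight of $v_k$; $S+\alpha(1,\dots,1)^t$ is also a marking. Thickening the $e$ edges between $v'$ (weight $s'$) and $v$ (weight $s>s'$): delete them, add new vertices $w_1,\dots,w_{s-s'-1}$, and with $w_0=v'$, $w_{s-s'}=v$, join $w_{k-1}$ and $w_k$ by $e(s-s')$ edges for $k=1,\dots,s-s'$. *)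

(* Defs.v *)
From HB Require Import structures.
From mathcomp Require Import all_boot all_order all_algebra.
Set Implicit Arguments. Unset Strict Implicit. Unset Printing Implicit Defensive.
Import Order.TTheory GRing.Theory Num.Theory.
Local Open Scope ring_scope.

(* A multigraph on vertex set 'I_n is given by c : 'I_n -> 'I_n -> nat,
   c i j = number of edges joining v_i and v_j. *)
Definition is_multigraph n (c : 'I_n -> 'I_n -> nat) : Prop :=
  (forall i j, c i j = c j i) /\ (forall i, c i i = 0%N).

Definition graph_connected n (c : 'I_n -> 'I_n -> nat) : Prop :=
  forall i j, connect [rel a b | (0 < c a b)%N] i j.

Definition Lap n (c : 'I_n -> 'I_n -> nat) : 'M[int]_n :=
  \matrix_(i, j) (if i == j then - \sum_(k | k != i) (c i k)%:Z else (c i j)%:Z).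

Definition evec n (i : 'I_n) : 'cV[int]_n := delta_mx i 0.

(* S is a marking for the pair {v_i, v_j} of order h (vertices 'I_n.+1,
   the last vertex v_n being ord_max). *)
Definition is_marking n (c : 'I_n.+1 -> 'I_n.+1 -> nat) (h : nat)
    (i j : 'I_n.+1) (S : 'cV[int]_n.+1) : Prop :=
  Lap c *m S = h%:Z *: (evec i - evec j) /\
  (\big[gcdn/0%N]_(k < n) `|S (widen_ord (leqnSn n) k) ord0 - S ord_max ord0|%N = 1%N).

(* Thickening the c v v' edges between v' (weight 0) and v (weight s):
   new vertices w_1..w_{s-1} are rshift n k (k : 'I_(s-1)) for w_{k+1};
   w_0 = v', w_s = v; consecutive w's joined by (c v v') * s edges. *)
Definition thick_pos n (v v' : 'I_n) (s : nat) (x : 'I_(n + (s - 1))) : option nat :=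
  match split x with
  | inl i => if i == v' then Some 0%N else if i == v then Some s else None
  | inr k => Some (nat_of_ord k).+1
  end.

Definition thicken n (c : 'I_n -> 'I_n -> nat) (v v' : 'I_n) (s : nat)
    : 'I_(n + (s - 1)) -> 'I_(n + (s - 1)) -> nat :=
  fun x y =>
  match split x, split y with
  | inl i, inl j =>
      if ((i == v) && (j == v')) || ((i == v') && (j == v)) then 0%N else c i j
  | _, _ =>
      match @thick_pos n v v' s x, @thick_pos n v v' s y with
      | Some a, Some b => if (a.+1 == b) || (b.+1 == a) then (c v v' * s)%N else 0%N
      | _, _ => 0%N
      end
  end.

(* Z^n / Im M and its torsion subgroup Phi, described via representatives. *)
Definition inIm n (M : 'M[int]_n) (x : 'cV[int]_n) : Prop :=
  exists y : 'cV[int]_n, x = M *m y.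

Definition torsion_cls n (M : 'M[int]_n) (x : 'cV[int]_n) : Prop :=
  exists k : nat, (0 < k)%N /\ inIm M (x *+ k).

(* A is (isomorphic to) a direct summand of Phi = torsion of Z^n/Im M:
   there are group homomorphisms iota : A -> Phi and pi : Phi -> A with
   pi \o iota = id.  iota is given by representatives, pi on representatives
   (additive on torsion classes and killing Im M, hence well defined on Phi). *)
Definition Phi_direct_summand n (M : 'M[int]_n) (A : zmodType) : Prop :=
  exists (iota : A -> 'cV[int]_n) (pi : 'cV[int]_n -> A),
  [/\ forall a, torsion_cls M (iota a),
      forall a b, inIm M (iota (a + b) - (iota a + iota b)),
      forall x y, torsion_cls M x -> torsion_cls M y -> pi (x + y) = pi x + pi y,
      forall x, inIm M x -> pi x = 0
    & forall a, pi (iota a) = a].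

Arguments thick_pos {n} v v' s x.
Arguments thicken {n} c v v' s x y.

(* Main.v *)
Require Import Defs.
From HB Require Import structures.
From mathcomp Require Import all_boot all_order all_algebra.
From mathcomp Require Import zify ring lra.
Import Order.TTheory GRing.Theory Num.Theory.
Local Open Scope ring_scope.
Set Implicit Arguments. Unset Strict Implicit. Unset Printing Implicit Defensive.

Lemma split_r m p (k : 'I_p) : split (rshift m k) = inr k.
Proof. exact: (unsplitK (inr _ k)). Qed.
Lemma split_l m p (k : 'I_m) : split (lshift p k) = inl k.
Proof. exact: (unsplitK (inl _ k)). Qed.

Lemma pos_W n (v v' : 'I_n.+1) s (k : 'I_(s-1)) :
  thick_pos v v' s (rshift n.+1 k) = Some k.+1.
Proof. by rewrite /thick_pos split_r. Qed.

Lemma pos_inj n (v v' : 'I_n.+1) s x y p : v != v' -> (2 <= s)%N ->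
  thick_pos v v' s x = Some p -> thick_pos v v' s y = Some p -> x = y.
Proof.
move=> vv s2; rewrite -[x]splitK -[y]splitK /thick_pos !unsplitK.
case: (split x) => [i|k]; case: (split y) => [i'|k'] /=.
- have key : forall i0 : 'I_n.+1, (if i0 == v' then Some 0%N else if i0 == v then Some s else None) = Some p -> i0 = if p == 0%N then v' else v.
    move=> i0; case: eqP => [->|_]; first by case=> <-.
    case: eqP => [->|_] //; case=> <-; have -> : (s == 0%N) = false by lia. by [].
  by move=> /key -> /key ->.
- have := ltn_ord k'.
  case: eqP => _; first by move=> _ [] <-.
  by case: eqP => // _ lt [] <- [] E; lia.
- have := ltn_ord k.
  case: eqP => _; first by move=> _ [] <-.
  by case: eqP => // _ lt [] <- [] E; lia.
- by move=> [] <- [] E; congr rshift; apply: ord_inj.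
Qed.

Lemma pos_ex n (v v' : 'I_n.+1) s p : v != v' -> (p <= s)%N ->
  exists x, thick_pos v v' s x = Some p.
Proof.
move=> ne ps.
case: (posnP p) => [->|p0].
  by exists (lshift (s-1) v'); rewrite /thick_pos split_l eqxx.
have [lt|ge] := ltnP p s.
  have h : (p.-1 < s - 1)%N by lia.
  exists (rshift n.+1 (Ordinal h)); rewrite pos_W /=; congr Some; lia.
have -> : p = s by lia.
exists (lshift (s-1) v); rewrite /thick_pos split_l eqxx (negbTE ne); by [].
Qed.

Definition tval (es : nat) (a b : option nat) : nat :=
  match a, b with
  | Some a, Some b => if (a.+1 == b) || (b.+1 == a) then es else 0%N
  | _, _ => 0%N
  end.

Lemma thicken_Wl n (c : 'I_n.+1 -> 'I_n.+1 -> nat) v v' s (k : 'I_(s-1)) z :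
  thicken c v v' s (rshift n.+1 k) z = tval (c v v' * s) (Some k.+1) (thick_pos v v' s z).
Proof. by rewrite /thicken split_r pos_W /=; case: (thick_pos _ _ _ z). Qed.

Lemma thicken_Wr n (c : 'I_n.+1 -> 'I_n.+1 -> nat) v v' s (k : 'I_(s-1)) z :
  thicken c v v' s z (rshift n.+1 k) = tval (c v v' * s) (thick_pos v v' s z) (Some k.+1).
Proof. by rewrite /thicken split_r pos_W /=; case: (split z) => /=; case: (thick_pos _ _ _ z). Qed.

Definition ucoef (k : nat) (o : option nat) : int :=
  match o with
  | Some p => (nat_of_bool (p == k))%:Z - (nat_of_bool (p == k.+1))%:Z * 2
              + (nat_of_bool (p == k.+2))%:Z
  | None => 0
  end.

Definition Ucol n (v v' : 'I_n.+1) s k : 'cV[int]_(n.+1 + (s-1)) :=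
  \col_x ucoef k (thick_pos v v' s x).
Definition Dcol n (v v' : 'I_n.+1) s k : 'cV[int]_(n.+1 + (s-1)) :=
  \col_x (nat_of_bool (thick_pos v v' s x == Some k.+1))%:Z.

Lemma col_lemma n (c : 'I_n.+1 -> 'I_n.+1 -> nat) v v' s k :
  v != v' -> (2 <= s)%N -> (k < s - 1)%N ->
  Lap (thicken c v v' s) *m Dcol v v' s k = (c v v' * s)%:Z *: Ucol v v' s k.
Proof.
move=> vv s2 kp; apply/colP => x; rewrite !mxE.
set W := rshift n.+1 (Ordinal kp).
have pW : thick_pos v v' s W = Some k.+1 by rewrite pos_W.
rewrite (bigD1 W) //= big1 ?addr0; last first.
  move=> y yW; rewrite !mxE.
  have -> : (thick_pos v v' s y == Some k.+1) = false.
    apply/negbTE/eqP => H; move/eqP: yW; apply; exact: pos_inj vv s2 H pW.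
  by rewrite mulr0.
rewrite !mxE pW eqxx mulr1.
case: eqVneq => [->|xW].
  rewrite pW /=.
  have [z0 p0] := @pos_ex n v v' s k vv ltac:(lia).
  have [z2 p2] := @pos_ex n v v' s k.+2 vv ltac:(lia).
  have z0W : z0 != W by apply/eqP => E; move: p0; rewrite E pW => -[]; lia.
  have z2W : z2 != W by apply/eqP => E; move: p2; rewrite E pW => -[]; lia.
  have z20 : z2 != z0 by apply/eqP => E; move: p2; rewrite E p0 => -[]; lia.
  rewrite (bigD1 z0) // (bigD1 z2) /=; last by rewrite z2W z20.
  rewrite big1 ?addr0; last first.
    move=> z /andP [] /andP [] zW zz0 zz2.
    rewrite /W thicken_Wl /=.
    case Hz: (thick_pos v v' s z) => [b|] //=.
    case: ifP => // /orP [] /eqP Eb.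
      by move/eqP: zz2; case; apply: pos_inj vv s2 Hz _; rewrite p2 -Eb.
    by move/eqP: zz0; case; apply: pos_inj vv s2 Hz _; rewrite p0; case: Eb => ->.
  rewrite /W !thicken_Wl p0 p2 /= !eqxx !orbT.
  have -> : (k.+1 == k) = false by lia.
  have -> : (k.+1 == k.+2) = false by lia.
  simpl; lia.
rewrite /W thicken_Wr.
case Hx: (thick_pos v v' s x) => [a|] /=; last by rewrite mulr0.
have ak : a != k.+1.
  apply/eqP => E; move/eqP: xW; apply; apply: pos_inj vv s2 Hx _; by rewrite pW E.
rewrite eqSS (negbTE ak) /=.
case: (eqVneq a k) => [->|ak'].
  have -> : (k == k.+2) = false by lia.
  simpl; lia.
case: (eqVneq a k.+2) => [E|ak2]; first by subst a; simpl; lia.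
simpl; lia.
Qed.

Lemma row_dvd n (c : 'I_n.+1 -> 'I_n.+1 -> nat) v v' s (m : 'I_(s-1)) z :
  ((c v v' * s)%:Z %| Lap (thicken c v v' s) (rshift n.+1 m) z)%Z.
Proof.
have H : forall y, ((c v v' * s)%:Z %| (thicken c v v' s (rshift n.+1 m) y)%:Z)%Z.
  move=> y; rewrite thicken_Wl /=; case: (thick_pos _ _ _ y) => [b|] /=; last exact: dvdz0.
  by case: ifP => _; [exact: dvdzz | exact: dvdz0].
rewrite mxE; case: ifP => _ //.
by rewrite rpredN; apply: rpred_sum => y _.
Qed.

Definition piZ n (s j : nat) (x : 'cV[int]_(n.+1 + (s-1))) : int :=
  \sum_(m < s-1) ((m - j)%N)%:Z * x (rshift n.+1 m) 0.

Lemma piZ_Im n (c : 'I_n.+1 -> 'I_n.+1 -> nat) v v' s j y :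
  ((c v v' * s)%:Z %| piZ j (Lap (thicken c v v' s) *m y))%Z.
Proof.
apply: rpred_sum => m _; apply: dvdz_mull; rewrite mxE.
apply: rpred_sum => z _; apply: dvdz_mulr; exact: row_dvd.
Qed.

Lemma piZD n s j (x y : 'cV[int]_(n.+1 + (s-1))) : piZ j (x + y) = piZ j x + piZ j y.
Proof. rewrite /piZ -big_split /=; apply: eq_bigr => m _; by rewrite mxE mulrDr. Qed.

Lemma piZ_sum n s j (I : finType) (q : I -> int) (X : I -> 'cV[int]_(n.+1 + (s-1))) :
  piZ j (\sum_i q i *: X i) = \sum_i q i * piZ j (X i).
Proof.
rewrite /piZ; under eq_bigr do rewrite summxE mulr_sumr.
rewrite exchange_big /=; apply: eq_bigr => i _; rewrite mulr_sumr; apply: eq_bigr => m _.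
by rewrite mxE mulrCA.
Qed.

Lemma sum_ind p (F : nat -> int) c :
  \sum_(m < p) F m * (nat_of_bool (nat_of_ord m == c))%:Z = if (c < p)%N then F c else 0.
Proof.
elim: p => [|p IH]; first by rewrite big_ord0.
rewrite big_ord_recr /= IH.
case: (ltngtP c p) => H.
- have -> : (c < p.+1)%N by lia. by rewrite mulr0 addr0.
- have -> : (c < p.+1)%N = false by lia. by rewrite mulr0 addr0.
- have -> : (c < p.+1)%N by lia. by rewrite mulr1 add0r H.
Qed.

Lemma piZ_U n v v' s j k : (j < s - 2)%N -> (k < s - 2)%N ->
  piZ j (@Ucol n v v' s k) = (nat_of_bool (j == k))%:Z.
Proof.
move=> js ks; rewrite /piZ.
under eq_bigr do rewrite mxE pos_W /= !eqSS mulrDr mulrBr mulrA.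
rewrite big_split sumrB /= -!mulr_suml.
rewrite !(sum_ind _ (fun m => ((m - j)%N)%:Z)).
have -> : (k < s - 1)%N by lia.
have -> : (k.+1 < s - 1)%N by lia.
case: k ks => [|k] ks.
  rewrite big1 ?add0r; last by move=> m _; rewrite mulr0.
  case: (eqVneq j 0%N) => [->|jn]; first by rewrite /=; lia.
  simpl; lia.
under eq_bigr do rewrite eqSS.
rewrite (sum_ind _ (fun m => ((m - j)%N)%:Z)); have -> : (k < s - 1)%N by lia.
case: (eqVneq j k.+1) => [->|jn]; first by simpl; lia.
simpl; lia.
Qed.

Lemma val_addZp p (x y : 'Z_p) : (1 < p)%N -> val (x + y) = ((val x + val y) %% p)%N.
Proof. move=> p1; have := val_Zp_nat p1 (val x + val y); rewrite natrD !natr_Zp; exact. Qed.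

Lemma modz_aux X d : ((X %% d)%N%:Z - X%:Z = - ((X %/ d)%N%:Z) * d%:Z)%R.
Proof. rewrite {2}(divn_eq X d) PoszD PoszM; ring. Qed.

Theorem lemma1p7 (n : nat) (c : 'I_n.+1 -> 'I_n.+1 -> nat)
    (h : nat) (i j : 'I_n.+1) (S : 'cV[int]_n.+1)
    (v v' : 'I_n.+1) (e s : nat) :
  is_multigraph c -> graph_connected c ->
  (0 < h)%N -> i != j -> is_marking c h i j S ->
  v != v' -> c v v' = e -> (1 <= e)%N ->
  S v' ord0 = 0 -> S v ord0 = s%:Z -> (2 <= s)%N ->
  Phi_direct_summand (Lap (thicken c v v' s)) 'rV['Z_(e * s)]_(s - 2).
Proof.
move=> _ _ _ _ _ vv ce e1 _ _ s2.
have es2 : (1 < e * s)%N by nia.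
set L := Lap (thicken c v v' s).
have ImC : forall q : 'I_(s-2) -> int,
    inIm L (\sum_k (q k * (e * s)%:Z) *: Ucol v v' s k).
  move=> q; exists (\sum_k q k *: Dcol v v' s k).
  rewrite mulmx_sumr; apply: eq_bigr => k _.
  have kp : (k < s - 1)%N by have := ltn_ord k; lia.
  by rewrite -scalemxAr /L col_lemma // ce scalerA.
pose iota (a : 'rV['Z_(e*s)]_(s-2)) : 'cV[int]_(n.+1 + (s-1)) :=
  \sum_(k < s-2) ((a 0 k : nat)%:Z) *: Ucol v v' s k.
pose pi (x : 'cV[int]_(n.+1 + (s-1))) : 'rV['Z_(e*s)]_(s-2) :=
  \row_(j < s-2) (piZ j x)%:~R.
exists iota, pi; split.
- move=> a; exists (e * s)%N; split; first by nia.
  rewrite /iota -sumrMnl.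
  rewrite (eq_bigr (fun k => (((a 0 k : nat)%:Z) * (e * s)%:Z) *: Ucol v v' s k)).
    exact: ImC.
  by move=> k _; rewrite scalerMnl -mulr_natr natz.
- move=> a b.
  rewrite /iota -big_split /= -sumrB.
  rewrite (eq_bigr (fun k => ((- (((a ord0 k : nat) + (b ord0 k : nat)) %/ (e * s))%N%:Z) * (e * s)%:Z) *: Ucol v v' s k)).
    exact: ImC.
  move=> k _; rewrite -scalerDl -scalerBl; congr (_ *: _).
  rewrite mxE val_addZp //.
  rewrite -PoszD; exact: modz_aux.
- move=> x y _ _; apply/rowP => k; by rewrite !mxE piZD intrD.
- move=> x [y ->]; apply/rowP => k; rewrite !mxE.
  have d := @piZ_Im n c v v' s k y; rewrite ce in d.
  rewrite -(divzK d) intrM.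
  have -> : ((e * s)%N%:Z)%:~R = (e * s)%:R :> 'Z_(e * s) by [].
  by rewrite pchar_Zp // mulr0.
- move=> a; apply/rowP => k; rewrite !mxE /iota piZ_sum.
  rewrite (bigD1 k) //= big1 ?addr0; last first.
    move=> l lk; rewrite piZ_U //.
    have -> : (nat_of_ord k == nat_of_ord l) = false by apply/negbTE; rewrite eq_sym.
    by rewrite mulr0.
  rewrite piZ_U // eqxx mulr1.
  have -> : ((a 0 k : nat)%:Z)%:~R = (a 0 k : nat)%:R :> 'Z_(e * s) by [].
  exact: natr_Zp.
Qed.
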